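(* Let $A^*\in\mathbb C^{N\times n}$ be isometric ($AA^*=I_n$), $x_0\in\mathbb C^n\setminus\{0\}$, $b=|A^*x_0|$, and let $\mathcal F(x)=A\big(b\odot\frac{A^*x}{|A^*x|}\big)$. Suppose $$\lambda_2:=\max\{\|\Im(B^*u)\|:\ u\in\mathbb C^n,\ \langle iu,x_0\rangle=0,\ \|u\|=1\}<1.$$ Then for every $0<\epsilon<1-\lambda_2^2$ there is a neighborhood of $x_0$ such that for every $x^{(1)}$ in it, the iterates $x^{(k+1)}=\mathcal F^k(x^{(1)})$ satisfy $$\|\alpha^{(k+1)}x^{(k+1)}-x_0\|\le(\lambda_2^2+\epsilon)\|\alpha^{(k)}x^{(k)}-x_0\|\quad\text{for all }k\ge1,$$ where $\alpha^{(k)}:=\arg\min\{\|\alpha x^{(k)}-x_0\|:\alpha\in\mathbb C,\ |\alpha|=1\}$. In particular $\alpha^{(k)}x^{(k)}\to x_0$ geometrically.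
   Context: $|y|$ is the componentwise modulus, $\odot$ the componentwise product, $y/|y|$ the componentwise quotient with convention $y(j)/|y(j)|=1$ if $y(j)=0$. $B:=A\,\mathrm{diag}\big(\frac{A^*x_0}{|A^*x_0|}\big)$. The real inner product on $\mathbb C^n$ is $\langle u,v\rangle=\Re(u^*v)$. *)

(* Defs.v *)
From Stdlib Require Import Reals List.
Open Scope R_scope.

Record Cx : Type := mkC { Cre : R; Cim : R }.

Definition C0 : Cx := mkC 0 0.
Definition C1 : Cx := mkC 1 0.
Definition Ci : Cx := mkC 0 1.
Definition Cadd (z w : Cx) : Cx := mkC (Cre z + Cre w) (Cim z + Cim w).
Definition Csub (z w : Cx) : Cx := mkC (Cre z - Cre w) (Cim z - Cim w).
Definition Cmul (z w : Cx) : Cx :=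
  mkC (Cre z * Cre w - Cim z * Cim w) (Cre z * Cim w + Cim z * Cre w).
Definition Cconj (z : Cx) : Cx := mkC (Cre z) (- Cim z).
Definition Cscale (r : R) (z : Cx) : Cx := mkC (r * Cre z) (r * Cim z).
Definition Cmod (z : Cx) : R := sqrt (Cre z ^ 2 + Cim z ^ 2).

(** z / |z|, with the convention z/|z| = 1 when z = 0 *)
Definition phase (z : Cx) : Cx :=
  if Req_dec_T (Cmod z) 0 then C1 else Cscale (/ Cmod z) z.

Definition sumC (m : nat) (f : nat -> Cx) : Cx :=
  fold_right (fun j acc => Cadd (f j) acc) C0 (seq 0 m).
Definition sumR (m : nat) (f : nat -> R) : R :=
  fold_right (fun j acc => f j + acc) 0 (seq 0 m).

(** Vectors of C^m are functions nat -> C (only indices < m matter);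
    matrices are functions nat -> nat -> Cx. *)
Definition vec := nat -> Cx.
Definition mat := nat -> nat -> Cx.

Definition vadd (u v : vec) : vec := fun i => Cadd (u i) (v i).
Definition vsub (u v : vec) : vec := fun i => Csub (u i) (v i).
Definition vsmul (a : Cx) (v : vec) : vec := fun i => Cmul a (v i).

Definition vnorm (m : nat) (v : vec) : R := sqrt (sumR m (fun i => Cmod (v i) ^ 2)).
Definition rnorm (m : nat) (v : nat -> R) : R := sqrt (sumR m (fun i => v i ^ 2)).

Definition rinner (m : nat) (u v : vec) : R :=
  Cre (sumC m (fun i => Cmul (Cconj (u i)) (v i))).

(** For A an n x N matrix: A y (y in C^N) and A^* x (x in C^n) *)
Definition matvec (n N : nat) (A : mat) (y : vec) : vec :=
  fun i => sumC N (fun j => Cmul (A i j) (y j)).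
Definition adjvec (n N : nat) (A : mat) (x : vec) : vec :=
  fun j => sumC n (fun i => Cmul (Cconj (A i j)) (x i)).

Definition AAstar_id (n N : nat) (A : mat) : Prop :=
  forall i i', (i < n)%nat -> (i' < n)%nat ->
    sumC N (fun j => Cmul (A i j) (Cconj (A i' j))) = if Nat.eqb i i' then C1 else C0.

Definition bvec (n N : nat) (A : mat) (x0 : vec) : nat -> R :=
  fun j => Cmod (adjvec n N A x0 j).

Definition Fmap (n N : nat) (A : mat) (x0 : vec) (x : vec) : vec :=
  matvec n N A (fun j => Cscale (bvec n N A x0 j) (phase (adjvec n N A x j))).

(** B = A diag(A^*x0/|A^*x0|) *)
Definition Bmat (n N : nat) (A : mat) (x0 : vec) : mat :=
  fun i j => Cmul (A i j) (phase (adjvec n N A x0 j)).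

Definition imBstar_norm (n N : nat) (A : mat) (x0 u : vec) : R :=
  rnorm N (fun j => Cim (adjvec n N (Bmat n N A x0) u j)).

Definition lam2_admissible (n : nat) (x0 u : vec) : Prop :=
  rinner n (vsmul Ci u) x0 = 0 /\ vnorm n u = 1.

Definition is_lambda2 (n N : nat) (A : mat) (x0 : vec) (lam : R) : Prop :=
  (exists u, lam2_admissible n x0 u /\ imBstar_norm n N A x0 u = lam) /\
  (forall u, lam2_admissible n x0 u -> imBstar_norm n N A x0 u <= lam).

Definition is_best_phase (n : nat) (x x0 : vec) (alpha : Cx) : Prop :=
  Cmod alpha = 1 /\
  forall beta, Cmod beta = 1 ->
    vnorm n (vsub (vsmul alpha x) x0) <= vnorm n (vsub (vsmul beta x) x0).

(** iterates: x^(k+1) = F^k (x^(1)) *)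
Definition iterate (F : vec -> vec) (k : nat) (x : vec) : vec := Nat.iter k F x.

(* Main.v *)
From Pilot Require Import Defs.
From Stdlib Require Import Reals List Lra Lia Psatz.
Import Pilot.Defs.
Open Scope R_scope.

Definition Copp (z : Cx) : Cx := mkC (- Cre z) (- Cim z).
Lemma Cx_eq z w : Cre z = Cre w -> Cim z = Cim w -> z = w.
Proof. destruct z, w; simpl; intros; subst; reflexivity. Qed.
Lemma Cring : ring_theory C0 C1 Cadd Cmul Csub Copp (@eq Cx).
Proof. constructor; intros; apply Cx_eq; simpl; ring. Qed.
Add Ring Cring : Cring.

Ltac ceq := apply Cx_eq; simpl; ring.

Lemma fold_accR (f : nat -> R) a l :
  fold_right (fun j acc => f j + acc) a l = fold_right (fun j acc => f j + acc) 0 l + a.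
Proof. induction l; simpl; [ring| rewrite IHl; ring]. Qed.
Lemma fold_accC (f : nat -> Cx) a l :
  fold_right (fun j acc => Cadd (f j) acc) a l = Cadd (fold_right (fun j acc => Cadd (f j) acc) C0 l) a.
Proof. induction l; simpl; [ring| rewrite IHl; ring]. Qed.

Lemma sumR_S m f : sumR (S m) f = sumR m f + f m.
Proof. unfold sumR. rewrite seq_S, fold_right_app. simpl. rewrite fold_accR. ring. Qed.
Lemma sumC_S m f : sumC (S m) f = Cadd (sumC m f) (f m).
Proof. unfold sumC. rewrite seq_S, fold_right_app. simpl. rewrite fold_accC. ring. Qed.
Lemma sumR_O f : sumR 0 f = 0. Proof. reflexivity. Qed.
Lemma sumC_O f : sumC 0 f = C0. Proof. reflexivity. Qed.

Lemma sumR_ext m f g : (forall i, (i < m)%nat -> f i = g i) -> sumR m f = sumR m g.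
Proof. induction m; intros H; auto. rewrite !sumR_S, IHm, H; auto. Qed.
Lemma sumC_ext m f g : (forall i, (i < m)%nat -> f i = g i) -> sumC m f = sumC m g.
Proof. induction m; intros H; auto. rewrite !sumC_S, IHm, H; auto. Qed.
Lemma sumR_add m f g : sumR m (fun i => f i + g i) = sumR m f + sumR m g.
Proof. induction m; [rewrite !sumR_O; ring|]. rewrite !sumR_S, IHm; ring. Qed.
Lemma sumR_scal m c f : sumR m (fun i => c * f i) = c * sumR m f.
Proof. induction m; [rewrite !sumR_O; ring|]. rewrite !sumR_S, IHm; ring. Qed.
Lemma sumR_opp m f : sumR m (fun i => - f i) = - sumR m f.
Proof. induction m; [rewrite !sumR_O; ring|]. rewrite !sumR_S, IHm; ring. Qed.
Lemma sumR_nonneg m f : (forall i, (i < m)%nat -> 0 <= f i) -> 0 <= sumR m f.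
Proof. induction m; intros H; [rewrite sumR_O; lra|]. rewrite sumR_S. 
  assert (0 <= sumR m f) by auto. assert (0 <= f m) by auto. lra. Qed.
Lemma sumR_le m f g : (forall i, (i < m)%nat -> f i <= g i) -> sumR m f <= sumR m g.
Proof. induction m; intros H; [rewrite !sumR_O; lra|]. rewrite !sumR_S.
  assert (sumR m f <= sumR m g) by auto. assert (f m <= g m) by auto. lra. Qed.
Lemma sumR_term m f i : (forall i, (i < m)%nat -> 0 <= f i) -> (i < m)%nat -> f i <= sumR m f.
Proof. induction m; intros H Hi; [lia|]. rewrite sumR_S.
  destruct (Nat.eq_dec i m) as [->|Hne].
  - assert (0 <= sumR m f) by (apply sumR_nonneg; auto). lra.
  - assert (f i <= sumR m f) by (apply IHm; auto; lia). assert (0 <= f m) by auto. lra. Qed.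

Lemma sumC_add m f g : sumC m (fun i => Cadd (f i) (g i)) = Cadd (sumC m f) (sumC m g).
Proof. induction m; [ceq|]. rewrite !sumC_S, IHm; ring. Qed.
Lemma sumC_sub m f g : sumC m (fun i => Csub (f i) (g i)) = Csub (sumC m f) (sumC m g).
Proof. induction m; [ceq|]. rewrite !sumC_S, IHm; ring. Qed.
Lemma sumC_mull m c f : sumC m (fun i => Cmul c (f i)) = Cmul c (sumC m f).
Proof. induction m; [ceq|]. rewrite !sumC_S, IHm; ring. Qed.
Lemma Cconj_add z w : Cconj (Cadd z w) = Cadd (Cconj z) (Cconj w).
Proof. ceq. Qed.
Lemma Cconj_mul z w : Cconj (Cmul z w) = Cmul (Cconj z) (Cconj w).
Proof. ceq. Qed.
Lemma sumC_conj m f : Cconj (sumC m f) = sumC m (fun i => Cconj (f i)).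
Proof. induction m; [ceq|]. rewrite !sumC_S, Cconj_add, IHm; ring. Qed.
Lemma sumC_swap n N (F : nat -> nat -> Cx) :
  sumC n (fun i => sumC N (fun j => F i j)) = sumC N (fun j => sumC n (fun i => F i j)).
Proof. induction n.
  - rewrite sumC_O. induction N; [reflexivity|]. rewrite sumC_S, <- IHN. ceq.
  - rewrite sumC_S, IHn. rewrite <- sumC_add. apply sumC_ext; intros. rewrite sumC_S. reflexivity. Qed.
Lemma Cre_sumC m f : Cre (sumC m f) = sumR m (fun i => Cre (f i)).
Proof. induction m; [reflexivity|]. rewrite sumC_S, sumR_S; simpl; rewrite IHm; ring. Qed.
Lemma Cim_sumC m f : Cim (sumC m f) = sumR m (fun i => Cim (f i)).
Proof. induction m; [reflexivity|]. rewrite sumC_S, sumR_S; simpl; rewrite IHm; ring. Qed.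
Lemma sumC_delta m i (x : nat -> Cx) :
  sumC m (fun i' => Cmul (if Nat.eqb i i' then C1 else C0) (x i')) = if Nat.ltb i m then x i else C0.
Proof. induction m.
  - simpl. destruct (Nat.ltb i 0); reflexivity.
  - rewrite sumC_S, IHm.
    destruct (Nat.eqb i m) eqn:E1.
    + apply Nat.eqb_eq in E1; subst. rewrite (proj2 (Nat.ltb_ge m m)) by lia.
      rewrite (proj2 (Nat.ltb_lt m (S m))) by lia. ring.
    + apply Nat.eqb_neq in E1. destruct (Nat.ltb i m) eqn:E2.
      * apply Nat.ltb_lt in E2. rewrite (proj2 (Nat.ltb_lt i (S m))) by lia. ring.
      * apply Nat.ltb_ge in E2. rewrite (proj2 (Nat.ltb_ge i (S m))) by lia. ring. Qed.
Lemma sq2_ge0 x y : 0 <= x ^ 2 + y ^ 2. Proof. nra. Qed.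
Definition hip (m : nat) (u v : vec) : Cx := sumC m (fun i => Cmul (Cconj (u i)) (v i)).
Definition nsq (m : nat) (v : vec) : R := sumR m (fun i => Cre (v i) ^ 2 + Cim (v i) ^ 2).

Lemma Cmod_sq z : Cmod z ^ 2 = Cre z ^ 2 + Cim z ^ 2.
Proof. unfold Cmod. apply pow2_sqrt. nra. Qed.
Lemma Cmod_ge0 z : 0 <= Cmod z. Proof. apply sqrt_pos. Qed.
Lemma nsq_ge0 m v : 0 <= nsq m v.
Proof. apply sumR_nonneg; intros; cbv beta; apply sq2_ge0. Qed.
Lemma vnorm_nsq m v : vnorm m v = sqrt (nsq m v).
Proof. unfold vnorm, nsq. f_equal. apply sumR_ext; intros. apply Cmod_sq. Qed.
Lemma vnorm_ge0 m v : 0 <= vnorm m v. Proof. apply sqrt_pos. Qed.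
Lemma vnorm_sq m v : vnorm m v ^ 2 = nsq m v.
Proof. rewrite vnorm_nsq. apply pow2_sqrt, nsq_ge0. Qed.
Lemma Cre_hip_self m v : Cre (hip m v v) = nsq m v.
Proof. unfold hip, nsq. rewrite Cre_sumC. apply sumR_ext; intros; simpl; ring. Qed.
Lemma vnorm_ext m u v : (forall i, (i < m)%nat -> u i = v i) -> vnorm m u = vnorm m v.
Proof. intros H. unfold vnorm. f_equal. apply sumR_ext. intros. rewrite H; auto. Qed.

Lemma sqrt_le_sq X Y : 0 <= Y -> X <= Y ^ 2 -> sqrt X <= Y.
Proof. intros HY H. rewrite <- (sqrt_pow2 Y HY). apply sqrt_le_1_alt; auto. Qed.

Lemma CS m a b c d :
  sumR m (fun i => a i * b i + c i * d i)
  <= sqrt (sumR m (fun i => a i ^ 2 + c i ^ 2)) * sqrt (sumR m (fun i => b i ^ 2 + d i ^ 2)).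
Proof.
  set (P := sumR m (fun i => a i ^ 2 + c i ^ 2)).
  set (Q := sumR m (fun i => a i * b i + c i * d i)).
  set (Rr := sumR m (fun i => b i ^ 2 + d i ^ 2)).
  assert (Hq : forall t, 0 <= P - 2 * t * Q + t ^ 2 * Rr).
  { intros t. assert (E : P - 2 * t * Q + t ^ 2 * Rr =
      sumR m (fun i => (a i - t * b i) ^ 2 + (c i - t * d i) ^ 2)).
    { unfold P, Q, Rr. rewrite <- sumR_scal, <- sumR_scal.
      unfold Rminus. rewrite <- sumR_opp, <- !sumR_add. apply sumR_ext; intros; ring. }
    rewrite E. apply sumR_nonneg; intros; cbv beta; apply sq2_ge0. }
  assert (HP : 0 <= P) by (apply sumR_nonneg; intros; cbv beta; apply sq2_ge0).
  assert (HR : 0 <= Rr) by (apply sumR_nonneg; intros; cbv beta; apply sq2_ge0).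
  assert (Hs : 0 <= sqrt P * sqrt Rr) by (apply Rmult_le_pos; apply sqrt_pos).
  destruct (Rle_lt_dec Q 0) as [HQ|HQ]; [lra|].
  destruct (Req_dec Rr 0) as [HR0|HR0].
  - specialize (Hq ((P + 1) / (2 * Q))). rewrite HR0 in Hq.
    assert (P - 2 * ((P + 1) / (2 * Q)) * Q = -1) by (field; lra). nra.
  - specialize (Hq (Q / Rr)).
    assert (P - 2 * (Q / Rr) * Q + (Q / Rr) ^ 2 * Rr = P - Q ^ 2 / Rr) by (field; lra).
    assert (Q ^ 2 <= P * Rr).
    { assert (0 <= P - Q^2/Rr) by lra.
      assert (Q^2 / Rr * Rr = Q^2) by (field; lra). nra. }
    rewrite <- sqrt_mult by auto. rewrite <- (sqrt_pow2 Q) by lra.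
    apply sqrt_le_1_alt. lra.
Qed.

Lemma CS_cpx m u v : Cre (hip m u v) <= vnorm m u * vnorm m v.
Proof. rewrite !vnorm_nsq. unfold hip, nsq. rewrite Cre_sumC.
  eapply Rle_trans; [|apply (CS m (fun i => Cre (u i)) (fun i => Cre (v i)) (fun i => Cim (u i)) (fun i => Cim (v i)))].
  right. apply sumR_ext; intros; simpl; ring. Qed.

Lemma CS_real m r q : sumR m (fun i => r i * q i) <= rnorm m r * rnorm m q.
Proof. unfold rnorm.
  pose proof (CS m r q (fun _ => 0) (fun _ => 0)) as H.
  replace (sumR m (fun i => r i * q i)) with (sumR m (fun i => r i * q i + 0 * 0)) by (apply sumR_ext; intros; ring).
  replace (sumR m (fun i => r i ^ 2)) with (sumR m (fun i => r i ^ 2 + 0 ^ 2)) by (apply sumR_ext; intros; ring).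
  replace (sumR m (fun i => q i ^ 2)) with (sumR m (fun i => q i ^ 2 + 0 ^ 2)) by (apply sumR_ext; intros; ring).
  exact H. Qed.

Lemma nsq_add m u v : nsq m (vadd u v) = nsq m u + nsq m v + 2 * Cre (hip m u v).
Proof. unfold nsq, hip. rewrite Cre_sumC, <- sumR_scal, <- !sumR_add.
  apply sumR_ext; intros; unfold vadd; simpl; ring. Qed.

Lemma vnorm_triangle m u v : vnorm m (vadd u v) <= vnorm m u + vnorm m v.
Proof. rewrite (vnorm_nsq m (vadd u v)). apply sqrt_le_sq.
  - pose proof (vnorm_ge0 m u); pose proof (vnorm_ge0 m v); lra.
  - rewrite nsq_add, <- !vnorm_sq. pose proof (CS_cpx m u v). nra. Qed.

Lemma Cmod_eq0 z : Cmod z = 0 -> Cre z = 0 /\ Cim z = 0.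
Proof. intros H. unfold Cmod in H. apply sqrt_eq_0 in H; [|nra]. split; nra. Qed.
Lemma Cmod_mul z w : Cmod (Cmul z w) = Cmod z * Cmod w.
Proof. unfold Cmod. rewrite <- sqrt_mult by nra. f_equal. simpl. ring. Qed.
Lemma Cmod_conj z : Cmod (Cconj z) = Cmod z.
Proof. unfold Cmod. f_equal. simpl. ring. Qed.
Lemma Cre_le_Cmod z : Cre z <= Cmod z.
Proof. unfold Cmod. destruct (Rle_lt_dec (Cre z) 0). - pose proof (sqrt_pos (Cre z ^ 2 + Cim z ^ 2)); lra.
  - rewrite <- (sqrt_pow2 (Cre z)) at 1 by lra. apply sqrt_le_1_alt. nra. Qed.
Lemma Cmod_unit_conj z : Cmod z = 1 -> Cmul (Cconj z) z = C1.
Proof. intros H. assert (Cmod z ^ 2 = 1) by (rewrite H; ring). rewrite Cmod_sq in H0.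
  apply Cx_eq; simpl; nra. Qed.
Lemma Cmod_term_le m v i : (i < m)%nat -> Cmod (v i) <= vnorm m v.
Proof. intros Hi. rewrite vnorm_nsq. rewrite <- (sqrt_pow2 (Cmod (v i))) by apply Cmod_ge0.
  apply sqrt_le_1_alt. rewrite Cmod_sq. unfold nsq.
  apply (sumR_term m (fun i => Cre (v i) ^ 2 + Cim (v i) ^ 2)); auto. intros; cbv beta; apply sq2_ge0. Qed.
Lemma sumC_mulr m c f : sumC m (fun i => Cmul (f i) c) = Cmul (sumC m f) c.
Proof. rewrite <- (Cring.(Rmul_comm) c). rewrite <- sumC_mull. apply sumC_ext; intros; ring. Qed.

Section Mat.
Variables (n N : nat) (A : mat).
Hypothesis hA : AAstar_id n N A.

Lemma AAstar x i : (i < n)%nat -> matvec n N A (adjvec n N A x) i = x i.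
Proof. intros Hi. unfold matvec, adjvec.
  transitivity (sumC N (fun j => sumC n (fun i' => Cmul (Cmul (A i j) (Cconj (A i' j))) (x i')))).
  { apply sumC_ext; intros. rewrite <- sumC_mull. apply sumC_ext; intros; ring. }
  rewrite <- sumC_swap.
  transitivity (sumC n (fun i' => Cmul (if Nat.eqb i i' then C1 else C0) (x i'))).
  { apply sumC_ext; intros i' Hi'. rewrite sumC_mulr. rewrite hA; auto. }
  rewrite sumC_delta. rewrite (proj2 (Nat.ltb_lt i n)) by auto. reflexivity. Qed.

Lemma adjoint s w : hip n (matvec n N A s) w = hip N s (adjvec n N A w).
Proof. unfold hip, matvec, adjvec.
  transitivity (sumC n (fun i => sumC N (fun j => Cmul (Cmul (Cconj (s j)) (Cconj (A i j))) (w i)))).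
  { apply sumC_ext; intros. rewrite sumC_conj, <- sumC_mulr. apply sumC_ext; intros.
    rewrite Cconj_mul. ring. }
  rewrite sumC_swap. apply sumC_ext; intros. rewrite <- sumC_mull. apply sumC_ext; intros. ring. Qed.

Lemma polar x y : hip N (adjvec n N A x) (adjvec n N A y) = hip n x y.
Proof. rewrite <- adjoint. unfold hip. apply sumC_ext; intros. rewrite AAstar; auto. Qed.

Lemma vnorm_adj x : vnorm N (adjvec n N A x) = vnorm n x.
Proof. rewrite !vnorm_nsq, <- !Cre_hip_self, polar. reflexivity. Qed.

Lemma matvec_norm s : vnorm n (matvec n N A s) <= vnorm N s.
Proof.
  pose proof (CS_cpx N s (adjvec n N A (matvec n N A s))) as H.
  rewrite <- adjoint, vnorm_adj, Cre_hip_self, <- vnorm_sq in H.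
  pose proof (vnorm_ge0 n (matvec n N A s)). pose proof (vnorm_ge0 N s).
  destruct (Req_dec (vnorm n (matvec n N A s)) 0); [lra|]. nra. Qed.
End Mat.

Lemma matvec_add n N A s t i :
  matvec n N A (fun j => Cadd (s j) (t j)) i = Cadd (matvec n N A s i) (matvec n N A t i).
Proof. unfold matvec. rewrite <- sumC_add. apply sumC_ext; intros; ring. Qed.
Lemma matvec_sub n N A s t i :
  matvec n N A (fun j => Csub (s j) (t j)) i = Csub (matvec n N A s i) (matvec n N A t i).
Proof. unfold matvec. rewrite <- sumC_sub. apply sumC_ext; intros; ring. Qed.
Lemma matvec_mull n N A a s i :
  matvec n N A (fun j => Cmul a (s j)) i = Cmul a (matvec n N A s i).
Proof. unfold matvec. rewrite <- sumC_mull. apply sumC_ext; intros; ring. Qed.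
Lemma adjvec_sub n N A x y j :
  adjvec n N A (vsub x y) j = Csub (adjvec n N A x j) (adjvec n N A y j).
Proof. unfold adjvec, vsub. rewrite <- sumC_sub. apply sumC_ext; intros; ring. Qed.
Lemma adjvec_smul n N A a x j :
  adjvec n N A (vsmul a x) j = Cmul a (adjvec n N A x j).
Proof. unfold adjvec, vsmul. rewrite <- sumC_mull. apply sumC_ext; intros; ring. Qed.
Lemma hip_sub_r m u v w : hip m u (vsub v w) = Csub (hip m u v) (hip m u w).
Proof. unfold hip, vsub. rewrite <- sumC_sub. apply sumC_ext; intros; ring. Qed.
Lemma hip_smul_r m u a v : hip m u (vsmul a v) = Cmul a (hip m u v).
Proof. unfold hip, vsmul. rewrite <- sumC_mull. apply sumC_ext; intros; ring. Qed.
Lemma hip_smul_l m u a v : hip m (vsmul a u) v = Cmul (Cconj a) (hip m u v).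
Proof. unfold hip, vsmul. rewrite <- sumC_mull. apply sumC_ext; intros. rewrite Cconj_mul. ring. Qed.
Lemma hip_conj m u v : hip m u v = Cconj (hip m v u).
Proof. unfold hip. rewrite sumC_conj. apply sumC_ext; intros. apply Cx_eq; simpl; ring. Qed.
Lemma Cim_hip_self m v : Cim (hip m v v) = 0.
Proof. unfold hip. rewrite Cim_sumC. rewrite <- (sumR_O (fun _ => 0)) at 1.
  transitivity (sumR m (fun _ => 0)). apply sumR_ext; intros; simpl; ring.
  induction m; [reflexivity|]. rewrite sumR_S, IHm. rewrite sumR_O; ring. Qed.
Lemma Cmod_unit_mul a z : Cmod a = 1 -> Cmod (Cmul a z) = Cmod z.
Proof. intros H. rewrite Cmod_mul, H. ring. Qed.
Lemma phase_mod z : Cmod (phase z) = 1.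
Proof. unfold phase. destruct (Req_dec_T (Cmod z) 0) as [H|H].
  - unfold Cmod. rewrite <- sqrt_1. f_equal. simpl. ring.
  - unfold Cmod at 1. rewrite <- sqrt_1. f_equal. cbn [Cscale Cre Cim]. pose proof (Cmod_sq z).
    replace ((/ Cmod z * Cre z) ^ 2 + (/ Cmod z * Cim z) ^ 2) with ((Cre z ^ 2 + Cim z ^ 2) / Cmod z ^ 2) by (field; auto).
    rewrite <- H0. field. auto. Qed.
Lemma phase_scale z : Cscale (Cmod z) (phase z) = z.
Proof. unfold phase. destruct (Req_dec_T (Cmod z) 0) as [H|H].
  - destruct (Cmod_eq0 z H). apply Cx_eq; simpl; rewrite H; lra.
  - apply Cx_eq; simpl; field; auto. Qed.
Lemma phase_mul a z : Cmod a = 1 -> Cmod z <> 0 -> phase (Cmul a z) = Cmul a (phase z).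
Proof. intros Ha Hz. unfold phase. rewrite Cmod_unit_mul by auto.
  destruct (Req_dec_T (Cmod z) 0) as [H|H]; [contradiction|].
  apply Cx_eq; simpl; field; auto. Qed.

Lemma eq_mod1 L R k s : L - R = (k - 1) * s -> k = 1 -> L = R.
Proof. intros H1 H2. rewrite H2 in H1. lra. Qed.

Section Best.
Variables (m : nat) (x x0 : vec).

Lemma dist2 b : Cmod b = 1 ->
  vnorm m (vsub (vsmul b x) x0) ^ 2 = nsq m x + nsq m x0 - 2 * Cre (Cmul b (hip m x0 x)).
Proof. intros Hb. pose proof (Cmod_sq b) as Hb2. rewrite Hb in Hb2.
  rewrite vnorm_sq. unfold hip. rewrite <- sumC_mull, Cre_sumC. unfold nsq.
  rewrite <- sumR_scal. unfold Rminus. rewrite <- sumR_opp, <- !sumR_add.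
  apply sumR_ext; intros. unfold vsub, vsmul; simpl.
  set (br := Cre b) in *. set (bi := Cim b) in *.
  set (xr := Cre (x i)). set (xi := Cim (x i)). set (yr := Cre (x0 i)). set (yi := Cim (x0 i)).
  apply (eq_mod1 _ _ (br^2+bi^2) (xr^2+xi^2)); [ring| lra]. Qed.

Lemma best_ineq a b : is_best_phase m x x0 a -> Cmod b = 1 ->
  Cre (Cmul b (hip m x0 x)) <= Cre (Cmul a (hip m x0 x)).
Proof. intros [Ha H] Hb. specialize (H b Hb).
  assert (vnorm m (vsub (vsmul a x) x0) ^ 2 <= vnorm m (vsub (vsmul b x) x0) ^ 2).
  { pose proof (vnorm_ge0 m (vsub (vsmul a x) x0)). apply pow_incr; auto. }
  rewrite !dist2 in H0 by auto. lra. Qed.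

Lemma best_real a : is_best_phase m x x0 a -> Cim (Cmul a (hip m x0 x)) = 0.
Proof. intros Hab. set (c := hip m x0 x).
  assert (Hge : Cmod c <= Cre (Cmul a c)).
  { destruct (Req_dec (Cmod c) 0) as [H0|H0].
    - destruct (Cmod_eq0 c H0). rewrite H0. simpl. rewrite H, H1. lra.
    - pose proof (best_ineq a (phase (Cconj c)) Hab (phase_mod _)) as H. fold c in H.
      unfold phase in H. rewrite Cmod_conj in H.
      destruct (Req_dec_T (Cmod c) 0) as [E|E]; [contradiction|].
      simpl in H. pose proof (Cmod_sq c).
      replace (/ Cmod c * Cre c * Cre c - / Cmod c * - Cim c * Cim c) with (Cmod c) in H; auto.
      field_simplify; auto. rewrite <- H1. field; auto. }
  pose proof (Cmod_sq (Cmul a c)). rewrite Cmod_unit_mul in H by (destruct Hab; auto).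
  pose proof (Cmod_ge0 c). nra. Qed.

Lemma best_exists : exists a, is_best_phase m x x0 a.
Proof. set (c := hip m x0 x). exists (phase (Cconj c)). split; [apply phase_mod|].
  intros b Hb. 
  assert (Cre (Cmul b c) <= Cre (Cmul (phase (Cconj c)) c)).
  { assert (Cre (Cmul b c) <= Cmod c).
    { pose proof (Cre_le_Cmod (Cmul b c)). rewrite Cmod_unit_mul in H; auto. }
    unfold phase. rewrite Cmod_conj.
    destruct (Req_dec_T (Cmod c) 0) as [E|E].
    - destruct (Cmod_eq0 c E). simpl. rewrite H0, H1. rewrite E in H. lra.
    - simpl. pose proof (Cmod_sq c).
      replace (/ Cmod c * Cre c * Cre c - / Cmod c * - Cim c * Cim c) with (Cmod c); auto.
      field_simplify; auto. rewrite <- H0. field; auto. }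
  assert (vnorm m (vsub (vsmul (phase (Cconj c)) x) x0) ^ 2 <= vnorm m (vsub (vsmul b x) x0) ^ 2).
  { rewrite !dist2 by (auto; apply phase_mod). fold c. lra. }
  pose proof (vnorm_ge0 m (vsub (vsmul (phase (Cconj c)) x) x0)).
  pose proof (vnorm_ge0 m (vsub (vsmul b x) x0)). nra. Qed.

Lemma best_same a a' : is_best_phase m x x0 a -> is_best_phase m x x0 a' ->
  vnorm m (vsub (vsmul a x) x0) = vnorm m (vsub (vsmul a' x) x0).
Proof. intros [Ha H] [Ha' H']. specialize (H a' Ha'). specialize (H' a Ha). lra. Qed.
End Best.
Lemma core_real b p q : 0 < b -> p ^ 2 + q ^ 2 <= b ^ 2 / 4 ->
  let s := sqrt ((b + p) ^ 2 + q ^ 2) in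
  (b * (b + p) / s - b) ^ 2 + (b * q / s - q) ^ 2 <= (6 * (p ^ 2 + q ^ 2) / b) ^ 2.
Proof. intros Hb HG s.
  assert (Hs2 : s ^ 2 = (b + p) ^ 2 + q ^ 2) by (apply pow2_sqrt; nra).
  assert (Hs0 : 0 <= s) by apply sqrt_pos.
  clearbody s.
  remember (p ^ 2 + q ^ 2) as G eqn:HeqG.
  assert (Hp : p ^ 2 <= b ^ 2 / 4) by nra.
  assert (Hp2 : - (b/2) <= p <= b / 2) by (split; nra).
  assert (Hsb : b / 2 <= s) by nra.
  assert (Hspos : 0 < s) by lra.
  remember (b * (b + p) / s - b) as X eqn:HeqX.
  remember (b * q / s - q) as Y eqn:HeqY.
  assert (EX : X * (s * (b + p + s)) = - (b * q ^ 2)).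
  { rewrite HeqX. field_simplify; [|lra]. 
    replace (b * (b + p) * (b + p + s) - b * s * (b + p + s)) with (b * ((b+p)^2 - s^2)) by ring.
    rewrite Hs2. ring. }
  assert (EY : Y * (s * (b + s)) = - (q * (2 * b * p + G))).
  { rewrite HeqY. field_simplify; [|lra]. 
    replace (b * q * (b + s) - q * s * (b + s)) with (q * (b^2 - s^2)) by ring.
    rewrite Hs2, HeqG. ring. }
  assert (D1 : b ^ 2 * (b ^ 2 / 4) <= (s * (b + p + s)) ^ 2).
  { assert (b <= b + p + s) by lra. assert (b / 2 * b <= s * (b + p + s)) by nra.
    assert (0 <= b / 2 * b) by nra. nra. }
  assert (D2 : b ^ 2 * (b ^ 2 / 4) <= (s * (b + s)) ^ 2).
  { assert (b <= b + s) by lra. assert (b / 2 * b <= s * (b + s)) by nra.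
    assert (0 <= b / 2 * b) by nra. nra. }
  assert (HX : X ^ 2 * b ^ 2 <= 4 * q ^ 4).
  { assert (X ^ 2 * (s * (b + p + s)) ^ 2 = b ^ 2 * q ^ 4) by (replace (X ^ 2 * (s * (b + p + s)) ^ 2) with ((X * (s * (b + p + s))) ^ 2) by ring; rewrite EX; ring).
    assert (X ^ 2 * (b ^ 2 * (b ^ 2 / 4)) <= b ^ 2 * q ^ 4).
    { rewrite <- H. apply Rmult_le_compat_l; auto. nra. }
    assert (0 < b ^ 2) by nra. nra. }
  assert (HGp : 0 <= G) by nra.
  assert (HB2 : (2 * b * p + G) ^ 2 <= 25 / 4 * b ^ 2 * G).
  { assert (4 * b * p * G <= 2 * b ^ 2 * G).
    { destruct (Rle_lt_dec p 0). - assert (b * p <= 0) by nra. nra.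
      - assert (b * p <= b * (b/2)) by nra. nra. }
    assert (G * G <= b ^ 2 / 4 * G) by nra.
    assert (p ^ 2 <= G) by nra. nra. }
  assert (HY : Y ^ 2 * b ^ 2 <= 25 * q ^ 2 * G).
  { assert (Y ^ 2 * (s * (b + s)) ^ 2 = q ^ 2 * (2 * b * p + G) ^ 2) by (replace (Y ^ 2 * (s * (b + s)) ^ 2) with ((Y * (s * (b + s))) ^ 2) by ring; rewrite EY; ring).
    assert (Y ^ 2 * (b ^ 2 * (b ^ 2 / 4)) <= q ^ 2 * (25 / 4 * b ^ 2 * G)).
    { eapply Rle_trans; [apply Rmult_le_compat_l; [nra| exact D2]|]. rewrite H.
      apply Rmult_le_compat_l; [nra| auto]. }
    assert (0 < b ^ 2) by nra. nra. }
  assert (Hq2 : q ^ 2 <= G) by nra.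
  assert (Htot : (X ^ 2 + Y ^ 2) * b ^ 2 <= 36 * G ^ 2).
  { assert (q ^ 4 <= G ^ 2) by nra. assert (q^2 * G <= G ^ 2) by nra. nra. }
  replace ((6 * G / b) ^ 2) with (36 * G ^ 2 / b ^ 2) by (field; lra).
  apply (Rmult_le_reg_r (b ^ 2)); [nra|]. 
  replace (36 * G ^ 2 / b ^ 2 * b ^ 2) with (36 * G ^ 2) by (field; lra). lra.
Qed.
Lemma aux_field b p q s : s <> 0 -> (b*(b+p)/s - b)^2 + (b*q/s - q)^2 = (b*(/s*(b+p)) - b - 0)^2 + (b*(/s*(0+q)) - 0 - q)^2.
Proof. intros. field. auto. Qed.
Lemma aux_pos b p q : 0 < b -> p^2+q^2 <= b^2/4 -> 0 < (b+p)^2+q^2.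
Proof. intros. assert (p^2 <= b^2/4) by nra. assert (-(b/2) <= p) by nra.
  assert (0 < b + p) by lra. nra. Qed.
Lemma aux_sq x b : 0 <= x -> x <= b / 2 -> x ^ 2 <= b ^ 2 / 4.
Proof. intros. nra. Qed.
Lemma Cscale_mul r u : Cscale r u = Cmul (mkC r 0) u.
Proof. ceq. Qed.

Lemma scalar_est c w : 0 < Cmod c -> Cmod (Csub w c) <= Cmod c / 2 ->
  Cmod (Csub (Csub (Cscale (Cmod c) (phase w)) c)
             (Cmul (phase c) (mkC 0 (Cim (Cmul (Cconj (phase c)) (Csub w c))))))
  <= 6 * Cmod (Csub w c) ^ 2 / Cmod c.
Proof. intros Hb Hwc.
  set (b := Cmod c) in *. set (om := phase c).
  set (g := Cmul (Cconj om) (Csub w c)).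
  assert (Hom : Cmod om = 1) by apply phase_mod.
  assert (Homc : Cmul (Cconj om) om = C1) by (apply Cmod_unit_conj; auto).
  assert (Hc : c = Cmul om (mkC b 0)).
  { rewrite <- (phase_scale c) at 1. fold b om. ceq. }
  assert (Hw : w = Cmul om (Cadd (mkC b 0) g)).
  { unfold g. transitivity (Cadd (Cmul om (mkC b 0)) (Cmul (Cmul (Cconj om) om) (Csub w c))).
    rewrite Homc, <- Hc. ring. ring. }
  assert (Hg : Cmod g = Cmod (Csub w c)).
  { unfold g. rewrite Cmod_mul, Cmod_conj, Hom. ring. }
  set (p := Cre g). set (q := Cim g).
  assert (HG : p ^ 2 + q ^ 2 = Cmod (Csub w c) ^ 2) by (rewrite <- Hg, Cmod_sq; reflexivity).
  assert (HG4 : p ^ 2 + q ^ 2 <= b ^ 2 / 4).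
  { rewrite HG. apply aux_sq; auto. apply Cmod_ge0. }
  set (z := Cadd (mkC b 0) g).
  assert (Hz : Cmod z = sqrt ((b + p) ^ 2 + q ^ 2)).
  { unfold Cmod. f_equal. unfold z. cbn [Cadd Cre Cim]. fold p q. ring. }
  assert (Hzpos : 0 < Cmod z).
  { rewrite Hz. apply sqrt_lt_R0. apply aux_pos; auto. }
  assert (Hpw : phase w = Cmul om (phase z)).
  { rewrite Hw. apply phase_mul; auto. lra. }
  rewrite Hpw. 
  assert (E : Csub (Csub (Cscale b (Cmul om (phase z))) c) (Cmul om (mkC 0 q))
     = Cmul om (Csub (Csub (Cscale b (phase z)) (mkC b 0)) (mkC 0 q))).
  { rewrite !Cscale_mul. rewrite Hc at 1. fold q. ring. }
  fold g. rewrite E, Cmod_mul, Hom, Rmult_1_l.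
  unfold phase. destruct (Req_dec_T (Cmod z) 0) as [E0|E0]; [lra|].
  rewrite Hz in *. set (s := sqrt ((b + p) ^ 2 + q ^ 2)) in *.
  unfold Cmod at 1. apply sqrt_le_sq.
  { apply Rmult_le_pos; [| left; apply Rinv_0_lt_compat; auto]. pose proof (pow2_ge_0 (Cmod (Csub w c))). lra. }
  replace (Cre (Csub (Csub (Cscale b (Cscale (/ s) z)) (mkC b 0)) (mkC 0 q)) ^ 2 +
           Cim (Csub (Csub (Cscale b (Cscale (/ s) z)) (mkC b 0)) (mkC 0 q)) ^ 2)
    with ((b * (b + p) / s - b) ^ 2 + (b * q / s - q) ^ 2).
  2:{ unfold z. cbn [Csub Cscale Cadd Cre Cim]. fold p q. apply aux_field; auto. }
  rewrite <- HG. apply core_real; auto.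
Qed.
Lemma sumC_zero m f : (forall i, (i < m)%nat -> f i = C0) -> sumC m f = C0.
Proof. intros H. induction m; [reflexivity|]. rewrite sumC_S, IHm, H; auto. ceq. Qed.
Lemma vnorm_smul m a u : vnorm m (vsmul a u) = Cmod a * vnorm m u.
Proof. rewrite !vnorm_nsq. rewrite <- (sqrt_pow2 (Cmod a)) by apply Cmod_ge0.
  rewrite <- sqrt_mult by (try apply pow2_ge_0; apply nsq_ge0). f_equal.
  unfold nsq. rewrite <- sumR_scal. apply sumR_ext; intros. rewrite Cmod_sq. unfold vsmul; simpl; ring. Qed.
Lemma rnorm_ge0 m r : 0 <= rnorm m r. Proof. apply sqrt_pos. Qed.
Lemma rnorm_ext m r q : (forall i, (i < m)%nat -> r i = q i) -> rnorm m r = rnorm m q.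
Proof. intros H; unfold rnorm; f_equal; apply sumR_ext; intros; rewrite H; auto. Qed.
Lemma rnorm_scal m t r : 0 <= t -> rnorm m (fun j => t * r j) = t * rnorm m r.
Proof. intros Ht. unfold rnorm.
  transitivity (sqrt (t ^ 2 * sumR m (fun i => r i ^ 2))).
  { f_equal. rewrite <- sumR_scal. apply sumR_ext; intros; ring. }
  rewrite sqrt_mult by (try apply pow2_ge_0; apply sumR_nonneg; intros; apply pow2_ge_0).
  rewrite sqrt_pow2; auto. Qed.
Lemma rnorm_le m r q : (forall i, (i < m)%nat -> r i ^ 2 <= q i ^ 2) -> rnorm m r <= rnorm m q.
Proof. intros H. apply sqrt_le_1_alt, sumR_le; auto. Qed.
Lemma vnorm_zero m u : vnorm m u = 0 -> forall i, (i < m)%nat -> u i = C0.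
Proof. intros H i Hi. pose proof (Cmod_term_le m u i Hi). pose proof (Cmod_ge0 (u i)).
  assert (Cmod (u i) = 0) by lra. destruct (Cmod_eq0 _ H2). apply Cx_eq; auto. Qed.
Lemma vnorm_le_K m u v K : 0 <= K -> (forall j, (j < m)%nat -> Cmod (u j) <= K * Cmod (v j)) ->
  vnorm m u <= K * vnorm m v.
Proof. intros HK H. rewrite !vnorm_nsq. rewrite <- (sqrt_pow2 K HK).
  rewrite <- sqrt_mult by (try apply pow2_ge_0; apply nsq_ge0). apply sqrt_le_1_alt.
  unfold nsq. rewrite <- sumR_scal. apply sumR_le. intros j Hj.
  rewrite <- !Cmod_sq. specialize (H j Hj). pose proof (Cmod_ge0 (u j)).
  replace (K ^ 2 * Cmod (v j) ^ 2) with ((K * Cmod (v j)) ^ 2) by ring. apply pow_incr. auto. Qed.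
Lemma Cim_sub z w : Cim (Csub z w) = Cim z - Cim w. Proof. reflexivity. Qed.
Lemma Cmod_C0 : Cmod C0 = 0.
Proof. unfold Cmod. rewrite <- sqrt_0. f_equal. simpl. ring. Qed.
Lemma Cmod_negsub c : Cmod (Csub C0 c) = Cmod c.
Proof. unfold Cmod. f_equal. simpl. ring. Qed.
Lemma Cre_conjCi Y : Cre (Cmul (Cconj Ci) Y) = Cim Y.
Proof. simpl. ring. Qed.
Lemma Cre_conjCi' Y : Cre (Cmul (Cconj Ci) (Cconj Y)) = - Cim Y.
Proof. simpl. ring. Qed.
Lemma Cim_mul_real b X : Cim (Cmul (mkC b 0) X) = b * Cim X.
Proof. simpl. ring. Qed.
Lemma conj_s_re o r Y : Cre (Cmul (Cconj (Cmul o (mkC 0 r))) Y) = r * Cim (Cmul (Cconj o) Y).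
Proof. simpl. ring. Qed.
Lemma aux_final g d bm bv : 0 <= g -> g <= d -> 0 < bm -> bm <= bv -> 6 * g ^ 2 / bv <= 6 * d / bm * g.
Proof. intros. assert (0 < bv) by lra.
  replace (6 * g ^ 2 / bv) with (6 * (g * g) / bv) by (field; lra).
  replace (6 * d / bm * g) with (6 * (g * d) / bm) by (field; lra).
  unfold Rdiv. apply Rmult_le_compat; try (apply Rmult_le_pos; nra); try (left; apply Rinv_0_lt_compat; lra).
  - nra. - apply Rinv_le_contravar; lra. Qed.
Section Main.
Variables (n N : nat) (A : mat) (x0 : vec) (lam2 : R).
Hypothesis hA : AAstar_id n N A.
Hypothesis hlam : is_lambda2 n N A x0 lam2.

Definition om j := phase (adjvec n N A x0 j).

Lemma adjB u j : adjvec n N (Bmat n N A x0) u j = Cmul (Cconj (om j)) (adjvec n N A u j).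
Proof. unfold adjvec, Bmat, om. rewrite <- sumC_mull. apply sumC_ext; intros.
  rewrite Cconj_mul. ring. Qed.

Lemma lam_nonneg : 0 <= lam2.
Proof. destruct hlam as [[u [_ Hu]] _]. rewrite <- Hu. apply rnorm_ge0. Qed.

Lemma admissible_bound u : rinner n (vsmul Ci u) x0 = 0 ->
  imBstar_norm n N A x0 u <= lam2 * vnorm n u.
Proof. intros Hu. pose proof lam_nonneg as Hl.
  destruct (Req_dec (vnorm n u) 0) as [H0|H0].
  - rewrite H0. unfold imBstar_norm.
    rewrite (rnorm_ext N _ (fun _ => 0 * 0)).
    + rewrite rnorm_scal by lra. lra.
    + intros j Hj. rewrite adjB. unfold adjvec. rewrite sumC_zero.
      * simpl; ring.
      * intros i Hi. rewrite (vnorm_zero n u H0 i Hi). ceq.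
  - set (t := / vnorm n u).
    assert (Ht : 0 < t) by (unfold t; apply Rinv_0_lt_compat; pose proof (vnorm_ge0 n u); lra).
    set (u' := vsmul (mkC t 0) u).
    assert (Hadm : lam2_admissible n x0 u').
    { split.
      - unfold rinner. fold (hip n (vsmul Ci u') x0).
        replace (hip n (vsmul Ci u') x0) with (Cmul (Cconj (mkC t 0)) (hip n (vsmul Ci u) x0)).
        + unfold rinner in Hu. fold (hip n (vsmul Ci u) x0) in Hu. simpl. rewrite Hu. ring.
        + rewrite <- hip_smul_l. unfold hip. apply sumC_ext; intros. unfold u', vsmul. f_equal. f_equal. ring.
      - unfold u'. rewrite vnorm_smul. unfold Cmod; simpl.
        replace (t * (t * 1) + 0 * (0 * 1)) with (t ^ 2) by ring. rewrite sqrt_pow2 by lra.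
        unfold t. field. auto. }
    destruct hlam as [_ Hmax]. specialize (Hmax u' Hadm).
    unfold imBstar_norm in *.
    rewrite (rnorm_ext N _ (fun j => t * Cim (adjvec n N (Bmat n N A x0) u j))) in Hmax.
    2:{ intros j Hj. rewrite !adjB. unfold u'. rewrite adjvec_smul. simpl. ring. }
    rewrite rnorm_scal in Hmax by lra.
    unfold t in Hmax. 
    apply (Rmult_le_reg_l (/ vnorm n u)); [auto|]. 
    replace (/ vnorm n u * (lam2 * vnorm n u)) with lam2 by (field; auto). auto.
Qed.

Definition bv j := bvec n N A x0 j.
Definition bminl (l : list nat) : R :=
  fold_right (fun j acc => if Req_dec_T (bv j) 0 then acc else Rmin (bv j) acc) 1 l.
Lemma bminl_pos l : 0 < bminl l.
Proof. induction l; simpl; [lra|]. destruct (Req_dec_T (bv a) 0); auto.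
  apply Rmin_glb_lt; auto. pose proof (Cmod_ge0 (adjvec n N A x0 a)). unfold bv, bvec in *. lra. Qed.
Lemma bminl_le l j : In j l -> bv j <> 0 -> bminl l <= bv j.
Proof. induction l; simpl; [tauto|]. intros [E|H] Hj.
  - subst. destruct (Req_dec_T (bv j) 0); [contradiction|]. apply Rmin_l.
  - destruct (Req_dec_T (bv a) 0); auto. eapply Rle_trans; [apply Rmin_r|]. auto. Qed.
Definition bm := bminl (seq 0 N).
Lemma bm_pos : 0 < bm. Proof. apply bminl_pos. Qed.
Lemma bm_le j : (j < N)%nat -> bv j <> 0 -> bm <= bv j.
Proof. intros. apply bminl_le; auto. apply in_seq. lia. Qed.

Variable eps : R.
Hypothesis heps : 0 < eps.
Definition delta := Rmin (bm / 2) (eps * bm / 6).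

Lemma step x a a' : is_best_phase n x x0 a -> is_best_phase n (Fmap n N A x0 x) x0 a' ->
  vnorm n (vsub (vsmul a x) x0) < delta ->
  vnorm n (vsub (vsmul a' (Fmap n N A x0 x)) x0) <= (lam2 ^ 2 + eps) * vnorm n (vsub (vsmul a x) x0).
Proof. intros Ha Ha' Hd.
  set (h := vsub (vsmul a x) x0) in *. set (d := vnorm n h) in *.
  pose proof bm_pos as Hbm.
  assert (Hd1 : d < bm / 2) by (eapply Rlt_le_trans; [exact Hd| apply Rmin_l]).
  assert (Hd2 : d < eps * bm / 6) by (eapply Rlt_le_trans; [exact Hd| apply Rmin_r]).
  assert (Hd0 : 0 <= d) by apply vnorm_ge0.
  assert (Hamod : Cmod a = 1) by (destruct Ha; auto).
  assert (H1 : Cim (hip n x0 h) = 0).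
  { unfold h. rewrite hip_sub_r, hip_smul_r, Cim_sub, (best_real n x x0 a Ha), Cim_hip_self. ring. }
  assert (H2 : vnorm n (vsub (vsmul a' (Fmap n N A x0 x)) x0) <= vnorm n (vsub (vsmul a (Fmap n N A x0 x)) x0))
    by (apply (proj2 Ha'); auto).
  set (z := adjvec n N A x). set (c0 := adjvec n N A x0). set (gA := adjvec n N A h).
  assert (HgA : forall j, gA j = Csub (Cmul a (z j)) (c0 j)).
  { intros; unfold gA, h. rewrite adjvec_sub, adjvec_smul; reflexivity. }
  assert (Hgd : forall j, (j < N)%nat -> Cmod (gA j) <= d).
  { intros j Hj. unfold d. rewrite <- (vnorm_adj n N A hA h). apply Cmod_term_le; auto. }
  set (t := fun j => Csub (Cmul a (Cscale (bv j) (phase (z j)))) (c0 j)).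
  assert (H3 : vnorm n (vsub (vsmul a (Fmap n N A x0 x)) x0) = vnorm n (matvec n N A t)).
  { apply vnorm_ext; intros i Hi. unfold t. rewrite matvec_sub, matvec_mull. unfold c0.
    rewrite (AAstar n N A hA) by auto. reflexivity. }
  set (r' := fun j => if Req_dec_T (bv j) 0 then 0 else Cim (Cmul (Cconj (om j)) (gA j))).
  set (s := fun j => Cmul (om j) (mkC 0 (r' j))).
  assert (H4 : vnorm n (matvec n N A t) <= vnorm n (matvec n N A s) + vnorm N (fun j => Csub (t j) (s j))).
  { rewrite (vnorm_ext n (matvec n N A t) (vadd (matvec n N A s) (matvec n N A (fun j => Csub (t j) (s j))))).
    - eapply Rle_trans; [apply vnorm_triangle|]. apply Rplus_le_compat_l. apply matvec_norm; auto.
    - intros. unfold vadd. rewrite <- matvec_add. unfold matvec. apply sumC_ext; intros; ring. }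
  assert (H5 : vnorm N (fun j => Csub (t j) (s j)) <= eps * d).
  { apply Rle_trans with ((6 * d / bm) * vnorm N gA).
    - apply vnorm_le_K. { apply Rmult_le_pos; [lra| left; apply Rinv_0_lt_compat; lra]. }
      intros j Hj. specialize (Hgd j Hj).
      destruct (Req_dec_T (bv j) 0) as [E|E].
      + assert (Hc0 : c0 j = C0).
        { destruct (Cmod_eq0 (c0 j) E). apply Cx_eq; auto. }
        assert (Hts : Csub (t j) (s j) = C0).
        { unfold t, s, r'. destruct (Req_dec_T (bv j) 0); [|contradiction].
          rewrite Hc0. apply Cx_eq; simpl; rewrite E; ring. }
        rewrite Hts, Cmod_C0. apply Rmult_le_pos; [|apply Cmod_ge0].
        apply Rmult_le_pos; [lra| left; apply Rinv_0_lt_compat; lra].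
      + assert (Hbv : 0 < Cmod (c0 j)).
        { pose proof (Cmod_ge0 (c0 j)). unfold bv, bvec in E. fold c0 in E. lra. }
        assert (Hbmj : bm <= Cmod (c0 j)) by (apply bm_le; auto).
        set (w := Cmul a (z j)).
        assert (Hwc : Cmod (Csub w (c0 j)) <= Cmod (c0 j) / 2).
        { unfold w. rewrite <- HgA. lra. }
        assert (Hz : Cmod (z j) <> 0).
        { intros Hz0. destruct (Cmod_eq0 _ Hz0).
          assert (Hw0 : w = C0) by (unfold w; apply Cx_eq; simpl; rewrite H, H0; ring).
          rewrite Hw0, Cmod_negsub in Hwc. lra. }
        assert (Htj : t j = Csub (Cscale (Cmod (c0 j)) (phase w)) (c0 j)).
        { unfold t, w. rewrite phase_mul by auto. unfold bv, bvec. fold c0. f_equal. ceq. }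
        assert (Hsj : s j = Cmul (phase (c0 j)) (mkC 0 (Cim (Cmul (Cconj (phase (c0 j))) (Csub w (c0 j)))))).
        { unfold s, r'. destruct (Req_dec_T (bv j) 0); [contradiction|]. unfold om. fold c0.
          rewrite HgA. reflexivity. }
        rewrite Htj, Hsj. eapply Rle_trans; [apply scalar_est; auto|].
        unfold w. rewrite <- HgA. apply aux_final; auto. apply Cmod_ge0.
    - unfold gA. rewrite (vnorm_adj n N A hA h). fold d.
      replace (6 * d / bm * d) with (d * (6 * d / bm)) by ring.
      rewrite (Rmult_comm eps). apply Rmult_le_compat_l; auto.
      apply (Rmult_le_reg_r bm); auto. replace (6 * d / bm * bm) with (6 * d) by (field; lra). lra. }
  assert (Hl : 0 <= lam2) by apply lam_nonneg.
  assert (Homc : forall j, Cmul (Cconj (om j)) (om j) = C1) by (intros; apply Cmod_unit_conj, phase_mod).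
  assert (Hc0 : forall j, c0 j = Cmul (om j) (mkC (bv j) 0)).
  { intros j. unfold om, bv, bvec. fold c0. rewrite <- (phase_scale (c0 j)) at 1. ceq. }
  assert (Hrr : rnorm N r' <= lam2 * d).
  { apply Rle_trans with (imBstar_norm n N A x0 h).
    - unfold imBstar_norm. apply rnorm_le. intros j Hj. rewrite adjB. fold gA.
      unfold r'. destruct (Req_dec_T (bv j) 0); [|lra]. pose proof (pow2_ge_0 (Cim (Cmul (Cconj (om j)) (gA j)))). 
      replace (0 ^ 2) with 0 by ring. auto.
    - apply admissible_bound. unfold rinner. fold (hip n (vsmul Ci h) x0).
      rewrite hip_smul_l, (hip_conj n h x0), Cre_conjCi', H1. ring. }
  set (u := matvec n N A s).
  assert (Hadm : rinner n (vsmul Ci u) x0 = 0).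
  { unfold rinner. fold (hip n (vsmul Ci u) x0). rewrite hip_smul_l, Cre_conjCi.
    unfold u. rewrite (adjoint n N A). fold c0. unfold hip. rewrite Cim_sumC.
    rewrite (sumR_ext N _ (fun j => - Cim (Cmul (Cconj (c0 j)) (gA j)))).
    - rewrite sumR_opp, <- Cim_sumC. fold (hip N c0 gA). unfold c0, gA. rewrite (polar n N A hA), H1. ring.
    - intros j Hj. 
      assert (E1 : Cmul (Cconj (s j)) (c0 j) = Cmul (Cmul (Cconj (om j)) (om j)) (Cmul (Cconj (mkC 0 (r' j))) (mkC (bv j) 0))).
      { unfold s. rewrite Hc0, Cconj_mul. ring. }
      assert (E2 : Cmul (Cconj (c0 j)) (gA j) = Cmul (mkC (bv j) 0) (Cmul (Cconj (om j)) (gA j))).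
      { rewrite Hc0, Cconj_mul. replace (Cconj (mkC (bv j) 0)) with (mkC (bv j) 0) by ceq. ring. }
      rewrite E1, E2, Homc, Cim_mul_real. unfold r'.
      destruct (Req_dec_T (bv j) 0) as [E|E]; simpl; [rewrite E|]; ring. }
  assert (Hu : vnorm n u <= lam2 * rnorm N r').
  { assert (Hn : nsq n u <= rnorm N r' * (lam2 * vnorm n u)).
    { rewrite <- Cre_hip_self. unfold u at 1. rewrite (adjoint n N A). unfold hip. rewrite Cre_sumC.
      rewrite (sumR_ext N _ (fun j => r' j * Cim (adjvec n N (Bmat n N A x0) u j))).
      - eapply Rle_trans; [apply CS_real|]. apply Rmult_le_compat_l; [apply rnorm_ge0|].
        apply admissible_bound; auto.
      - intros j Hj. rewrite adjB. unfold s. apply conj_s_re. }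
    rewrite <- vnorm_sq in Hn. pose proof (vnorm_ge0 n u). pose proof (rnorm_ge0 N r').
    destruct (Req_dec (vnorm n u) 0) as [E|E]; [rewrite E; nra|].
    assert (0 < vnorm n u) by lra.
    apply (Rmult_le_reg_r (vnorm n u)); auto. nra. }
  rewrite H2, H3. eapply Rle_trans; [exact H4|].
  assert (vnorm n u <= lam2 ^ 2 * d) by (eapply Rle_trans; [exact Hu|]; nra).
  fold u. lra.
Qed.
End Main.

Lemma Cmod_C1 : Cmod C1 = 1.
Proof. unfold Cmod. rewrite <- sqrt_1. f_equal. simpl. ring. Qed.

Theorem mainTheorem9 (n N : nat) (A : mat) (x0 : vec) (lam2 : R)
  (hA : AAstar_id n N A)
  (hx0 : exists i, (i < n)%nat /\ x0 i <> C0)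
  (hlam : is_lambda2 n N A x0 lam2)
  (hlam1 : lam2 < 1) :
  forall eps, 0 < eps -> eps < 1 - lam2 ^ 2 ->
  exists delta, 0 < delta /\
    forall x1 : vec, vnorm n (vsub x1 x0) < delta ->
    forall (k : nat) (ak ak1 : Cx),
      is_best_phase n (iterate (Fmap n N A x0) k x1) x0 ak ->
      is_best_phase n (iterate (Fmap n N A x0) (S k) x1) x0 ak1 ->
      vnorm n (vsub (vsmul ak1 (iterate (Fmap n N A x0) (S k) x1)) x0)
        <= (lam2 ^ 2 + eps) *
           vnorm n (vsub (vsmul ak (iterate (Fmap n N A x0) k x1)) x0).
Proof.
  intros eps heps heps2.
  pose proof (bm_pos n N A x0) as Hbm.
  exists (delta n N A x0 eps). split.
  { unfold delta. apply Rmin_glb_lt; [lra|]. apply Rmult_lt_0_compat; [|lra]. nra. }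
  intros x1 Hx1.
  assert (Hl : 0 <= lam2) by (apply (lam_nonneg n N A x0 lam2 hlam)).
  assert (Inv : forall k a, is_best_phase n (iterate (Fmap n N A x0) k x1) x0 a ->
     vnorm n (vsub (vsmul a (iterate (Fmap n N A x0) k x1)) x0) < delta n N A x0 eps).
  { induction k; intros a Ha.
    - eapply Rle_lt_trans; [apply (proj2 Ha C1 Cmod_C1)|].
      rewrite (vnorm_ext n _ (vsub x1 x0)); auto.
      intros i Hi. unfold vsub, vsmul. simpl. f_equal. ceq.
    - destruct (best_exists n (iterate (Fmap n N A x0) k x1) x0) as [a0 Ha0].
      specialize (IHk a0 Ha0).
      pose proof (step n N A x0 lam2 hA hlam eps (iterate (Fmap n N A x0) k x1) a0 a Ha0 Ha IHk) as Hs.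
      change (iterate (Fmap n N A x0) (S k) x1) with (Fmap n N A x0 (iterate (Fmap n N A x0) k x1)).
      eapply Rle_lt_trans; [exact Hs|].
      pose proof (vnorm_ge0 n (vsub (vsmul a0 (iterate (Fmap n N A x0) k x1)) x0)).
      assert (0 <= lam2 ^ 2 + eps) by nra.
      assert (lam2 ^ 2 + eps < 1) by lra. nra. }
  intros k ak ak1 Hk Hk1.
  apply (step n N A x0 lam2 hA hlam eps (iterate (Fmap n N A x0) k x1) ak ak1 Hk Hk1 (Inv k ak Hk)).
Qed.
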